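(* For every $q\geqslant 1$ and all natural numbers $m_0,\dots,m_{q-1}>1$, the following sentences are provable in the theory ${\sf TQ}$: $\forall x_0,\dots,x_{q-1}\exists y\,[\bigwedge_{j<q}\neg\Re_{m_j}(y\cdot x_j)]$; $\forall x_0,\dots,x_{q-1},u\exists y\,[u<y\wedge\bigwedge_{j<q}\neg\Re_{m_j}(y\cdot x_j)]$; $\forall x_0,\dots,x_{q-1},v\exists y\,[y<v\wedge\bigwedge_{j<q}\neg\Re_{m_j}(y\cdot x_j)]$; $\forall x_0,\dots,x_{q-1},u,v\exists y\,[u<v\rightarrow (u<y\wedge y<v\wedge\bigwedge_{j<q}\neg\Re_{m_j}(y\cdot x_j))]$.
   Context: Language $\{<,\times,\square^{-1},\mathbf{1}\}$; $y^n$ abbreviates $y\cdots y$ ($n$ times); for $n\geqslant 1$, $\Re_n(y)$ abbreviates the formula $\exists x\,(y=x^n)$. ${\sf TQ}$ is the theory axiomatized by: ($\texttt{O}_1$) $\forall x,y(x<y\rightarrow\neg(y<x))$; ($\texttt{O}_2$) $\forall x,y,z(x<y\wedge y<z\rightarrow x<z)$; ($\texttt{O}_3$) $\forall x,y(x<y\vee x=y\vee y<x)$; ($\texttt{M}_1$) $\forall x,y,z(x\cdot(y\cdot z)=(x\cdot y)\cdot z)$; ($\texttt{M}_2$) $\forall x(x\cdot\mathbf{1}=x)$; ($\texttt{M}_3$) $\forall x(x\cdot x^{-1}=\mathbf{1})$; ($\texttt{M}_4$) $\forall x,y(x\cdot y=y\cdot x)$; ($\texttt{M}_5$) $\forall x,y,z(x<y\rightarrow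 x\cdot z<y\cdot z)$; ($\texttt{M}_6$) $\exists y(y\neq\mathbf{1})$; ($\texttt{M}_{10}$) for each $n\geqslant1$: $\forall x,z\exists y(x<z\rightarrow x<y^n\wedge y^n<z)$; ($\texttt{M}_{11}$) for each $n\geqslant 1$, each $q\geqslant1$ and all natural numbers $m_0,\dots,m_{q-1}>1$: $\forall x_0,\dots,x_{q-1}\exists y\forall z\bigwedge_{j<q,\ m_j\nmid n}(y^n\cdot x_j\neq z^{m_j})$, the conjunction ranging over those $j<q$ for which $m_j$ does not divide $n$. *)

(* Defs.v *)
(* Models of the first-order theory TQ over the language
   {<, *, ^-1, 1}.  "Provable in TQ" is rendered semantically: true in
   every model of TQ (equivalent by Goedel's completeness theorem). *)
From Stdlib Require Import Arith PeanoNat.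

Record TQstruct := {
  car :> Type;
  lt : car -> car -> Prop;
  mul : car -> car -> car;
  inv : car -> car;
  one : car
}.

(* y^n = y...y (n times), for n >= 1; y^0 is set to 1 (never used). *)
Fixpoint pw (M : TQstruct) (y : M) (n : nat) : M :=
  match n with
  | 0 => one M
  | 1 => y
  | S k => mul M y (pw M y k)
  end.

Definition Re (M : TQstruct) (n : nat) (y : M) : Prop :=
  exists x : M, y = pw M x n.

Definition TQ (M : TQstruct) : Prop :=
  let lt := lt M in let mul := mul M in
  (forall x y : M, lt x y -> ~ lt y x) /\
  (forall x y z : M, lt x y -> lt y z -> lt x z) /\
  (forall x y : M, lt x y \/ x = y \/ lt y x) /\
  (forall x y z : M, mul x (mul y z) = mul (mul x y) z) /\
  (forall x : M, mul x (one M) = x) /\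
  (forall x : M, mul x (inv M x) = one M) /\
  (forall x y : M, mul x y = mul y x) /\
  (forall x y z : M, lt x y -> lt (mul x z) (mul y z)) /\
  (exists y : M, y <> one M) /\
  (* M10 *) (forall n : nat, 1 <= n ->
       forall x z : M, exists y : M,
         lt x z -> lt x (pw M y n) /\ lt (pw M y n) z) /\
  (* M11 *) (forall (n q : nat) (m : nat -> nat), 1 <= n -> 1 <= q ->
       (forall j, j < q -> 1 < m j) ->
       forall x : nat -> M, exists y : M, forall z : M,
         forall j, j < q -> ~ Nat.divide (m j) n ->
           mul (pw M y n) (x j) <> pw M z (m j)).

(* Main.v *)
Require Import Defs.
From Stdlib Require Import Arith PeanoNat Lia.

Section Alg.
Variable M : TQstruct.
Hypothesis HM : TQ M.

Let A1 : forall x y z : M, mul M x (mul M y z) = mul M (mul M x y) z.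
Proof. destruct HM as (_&_&_&h&_). exact h. Qed.
Let A2 : forall x : M, mul M x (one M) = x.
Proof. destruct HM as (_&_&_&_&h&_). exact h. Qed.
Let A3 : forall x : M, mul M x (inv M x) = one M.
Proof. destruct HM as (_&_&_&_&_&h&_). exact h. Qed.
Let A4 : forall x y : M, mul M x y = mul M y x.
Proof. destruct HM as (_&_&_&_&_&_&h&_). exact h. Qed.
Let A5 : forall x y z : M, lt M x y -> lt M (mul M x z) (mul M y z).
Proof. destruct HM as (_&_&_&_&_&_&_&h&_). exact h. Qed.

Lemma one_l : forall x : M, mul M (one M) x = x.
Proof. intro x. rewrite A4. apply A2. Qed.

Lemma pw_S : forall (y : M) k, pw M y (S k) = mul M y (pw M y k).
Proof. intros y [|k]; simpl; [rewrite A2|]; reflexivity. Qed.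

Lemma pw_add : forall (y : M) a b, pw M y (a + b) = mul M (pw M y a) (pw M y b).
Proof.
  intros y a b. induction a as [|a IH]; simpl plus.
  - simpl. rewrite one_l. reflexivity.
  - rewrite !pw_S, IH, A1. reflexivity.
Qed.

Lemma pw_mul : forall (y : M) a b, pw M y (a * b) = pw M (pw M y a) b.
Proof.
  intros y a b. induction b as [|b IH].
  - rewrite Nat.mul_0_r. reflexivity.
  - rewrite pw_S, <- IH. replace (a * S b) with (a + a * b) by lia.
    apply pw_add.
Qed.

Lemma pw_distr : forall (a b : M) n, pw M (mul M a b) n = mul M (pw M a n) (pw M b n).
Proof.
  intros a b n. induction n as [|n IH].
  - simpl. rewrite A2. reflexivity.
  - rewrite !pw_S, IH.
    rewrite <- !A1. f_equal. rewrite !A1. f_equal. apply A4.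
Qed.

Lemma pw_one : forall n, pw M (one M) n = one M.
Proof. induction n as [|n IH]; [reflexivity|]. rewrite pw_S, IH. apply A2. Qed.

Lemma pw_inv : forall (a : M) n, mul M (pw M a n) (pw M (inv M a) n) = one M.
Proof. intros a n. rewrite <- pw_distr, A3. apply pw_one. Qed.

End Alg.

Fixpoint prodm (m : nat -> nat) (k : nat) : nat :=
  match k with 0 => 1 | S k => m k * prodm m k end.

Lemma prodm_div : forall m k j, j < k -> Nat.divide (m j) (prodm m k).
Proof.
  intros m k. induction k as [|k IH]; intros j Hj; [lia|].
  simpl. destruct (Nat.eq_dec j k) as [->|Hne].
  - exists (prodm m k). lia.
  - apply Nat.divide_mul_r. apply IH. lia.
Qed.

Lemma prodm_pos : forall m k, (forall j, j < k -> 1 < m j) -> 1 <= prodm m k.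
Proof.
  intros m k. induction k as [|k IH]; intros H; simpl; [lia|].
  assert (1 < m k) by (apply H; lia).
  assert (1 <= prodm m k) by (apply IH; intros; apply H; lia). nia.
Qed.

Lemma part4 : forall (q : nat) (m : nat -> nat), 1 <= q -> (forall j, j < q -> 1 < m j) ->
  forall M : TQstruct, TQ M ->
  forall (x : nat -> M) (u v : M), lt M u v -> exists y : M,
        (lt M u y /\ lt M y v /\
         forall j, j < q -> ~ Re M (m j) (mul M y (x j))).
Proof.
  intros q m Hq Hm M HM x u v Huv.
  pose proof HM as (O1&O2&O3&A1&A2&A3&A4&A5&A6&A10&A11).
  destruct (A11 1 q m (le_n 1) Hq Hm x) as [w Hw].
  set (P := prodm m q).
  destruct (A10 P (prodm_pos m q Hm) (mul M u (inv M w)) (mul M v (inv M w))) as [t Ht].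
  assert (Hi : forall a, mul M (mul M a (inv M w)) w = a).
  { intro a. rewrite <- A1, (A4 (inv M w)), A3. apply A2. }
  destruct Ht as [H1 H2].
  { apply A5. exact Huv. }
  exists (mul M (pw M t P) w). split; [|split].
  - rewrite <- (Hi u) at 1. apply A5. exact H1.
  - rewrite <- (Hi v). apply A5. exact H2.
  - intros j Hj [z Hz].
    destruct (prodm_div m q j Hj) as [k Hk]. fold P in Hk.
    set (s := pw M t k).
    assert (Hs : pw M t P = pw M s (m j)) by (unfold s; rewrite Hk; apply pw_mul; exact HM).
    apply (Hw (mul M z (inv M s)) j Hj).
    { intros Hd. assert (m j <= 1) by (apply Nat.divide_pos_le; auto). specialize (Hm j Hj). lia. }
    simpl. rewrite (pw_distr M HM), <- Hz, Hs.
    set (S := pw M s (m j)). set (I := pw M (inv M s) (m j)).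
    assert (HSI : mul M S I = one M) by apply (pw_inv M HM).
    rewrite <- (A2 (mul M w (x j))), <- HSI.
    rewrite A1. f_equal. rewrite (A4 S w), <- !A1, (A4 (x j) S). reflexivity.
Qed.

Theorem lemma4 :
  forall (q : nat) (m : nat -> nat), 1 <= q -> (forall j, j < q -> 1 < m j) ->
  forall M : TQstruct, TQ M ->
    (forall x : nat -> M, exists y : M,
        forall j, j < q -> ~ Re M (m j) (mul M y (x j))) /\
    (forall (x : nat -> M) (u : M), exists y : M,
        lt M u y /\ forall j, j < q -> ~ Re M (m j) (mul M y (x j))) /\
    (forall (x : nat -> M) (v : M), exists y : M,
        lt M y v /\ forall j, j < q -> ~ Re M (m j) (mul M y (x j))) /\
    (forall (x : nat -> M) (u v : M), exists y : M,
        lt M u v ->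
        (lt M u y /\ lt M y v /\
         forall j, j < q -> ~ Re M (m j) (mul M y (x j)))).
Proof.
  intros q m Hq Hm M HM.
  pose proof HM as (O1&O2&O3&A1&A2&A3&A4&A5&A6&A10&A11).
  assert (Hb : exists b : M, lt M (one M) b).
  { destruct A6 as [a Ha]. destruct (O3 a (one M)) as [H|[H|H]].
    - exists (inv M a). pose proof (A5 _ _ (inv M a) H) as H'.
      rewrite A3, (one_l M HM) in H'. exact H'.
    - contradiction.
    - exists a; exact H. }
  destruct Hb as [b Hb].
  split; [|split; [|split]].
  - intros x. destruct (A11 1 q m (le_n 1) Hq Hm x) as [w Hw].
    exists w. intros j Hj [z Hz]. apply (Hw z j Hj); [|exact Hz].
    intros Hd. assert (m j <= 1) by (apply Nat.divide_pos_le; auto). specialize (Hm j Hj). lia.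
  - intros x u. assert (H : lt M u (mul M b u)).
    { pose proof (A5 _ _ u Hb) as H. rewrite (one_l M HM) in H. exact H. }
    destruct (part4 q m Hq Hm M HM x u _ H) as [y (Hy1&_&Hy3)]. eauto.
  - intros x v. assert (H : lt M (mul M (inv M b) v) v).
    { pose proof (A5 _ _ (inv M b) Hb) as H. rewrite A3, (one_l M HM) in H.
      pose proof (A5 _ _ v H) as H'. rewrite (one_l M HM) in H'. exact H'. }
    destruct (part4 q m Hq Hm M HM x _ v H) as [y (_&Hy2&Hy3)]. eauto.
  - intros x u v. destruct (O3 u v) as [H|H].
    + destruct (part4 q m Hq Hm M HM x u v H) as [y Hy]. exists y. auto.
    + exists u. intro H'. destruct H as [->|H]; exfalso; [|eapply O1; eauto].
      eapply O1; eauto.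
Qed.
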